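(* Let $p=3$, $a\in\mathbb{C}_3$, $a\ne0$, $A=|a|_3$, $f(x)=\frac{ax}{x^2+a}$, and $t_1=\sqrt{-2a}$, $t_2=-\sqrt{-2a}$. Let $0<r<\sqrt A$. Then: (a) for every $x\in S_r(t_1)\setminus\mathcal P_2$, $\lim_{n\to\infty}f^{2n}(x)=t_1$ and $\lim_{n\to\infty}f^{2n+1}(x)=t_2$; (b) for every $x\in S_r(t_2)\setminus\mathcal P_2$, $\lim_{n\to\infty}f^{2n}(x)=t_2$ and $\lim_{n\to\infty}f^{2n+1}(x)=t_1$.
   Context: $S_r(t)=\{x\in\mathbb{C}_3:|x-t|_3=r\}$. $\mathcal P_2=\{x\in\mathbb{C}_p:\exists n\in\mathbb{N},\ f^n(x)\in\{\pm\sqrt{-a},\ \pm\sqrt{(-3\pm\sqrt5)a/2}\}\}$ (the points whose orbit reaches a singularity of $f$ or $f\circ f$). The points $t_1,t_2$ form a $2$-cycle of $f$. *)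

(* Defs.v *)
From Stdlib Require Import Reals.
From mathcomp Require Import all_boot all_order all_algebra.
Set Implicit Arguments. Unset Strict Implicit. Unset Printing Implicit Defensive.
Import GRing.Theory.
Local Open Scope ring_scope.

(* (F, abs) is a model of C_3: an algebraically closed field with a
   non-archimedean absolute value abs : F -> R, normalized by |3| = 1/3,
   and complete with respect to abs. *)
Definition is_C3_like (F : closedFieldType) (abs : F -> R) : Prop :=
  (forall x : F, Rle R0 (abs x)) /\
  (forall x : F, abs x = R0 <-> x = 0) /\
  (forall x y : F, abs (x * y) = Rmult (abs x) (abs y)) /\
  (forall x y : F, Rle (abs (x + y)) (Rmax (abs x) (abs y))) /\
  abs (3%:R : F) = Rinv (INR 3) /\
  (forall u : nat -> F,
        (forall eps : R, Rlt R0 eps -> exists N : nat,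
            forall m n : nat, (N <= m)%N -> (N <= n)%N ->
              Rlt (abs (u m - u n)) eps) ->
        exists l : F, forall eps : R, Rlt R0 eps -> exists N : nat,
            forall n : nat, (N <= n)%N -> Rlt (abs (u n - l)) eps).

Definition converges_to (F : closedFieldType) (abs : F -> R)
    (u : nat -> F) (l : F) : Prop :=
  forall eps : R, Rlt R0 eps -> exists N : nat,
    forall n : nat, (N <= n)%N -> Rlt (abs (u n - l)) eps.

Definition fa (F : closedFieldType) (a : F) (x : F) : F :=
  a * x / (x ^+ 2 + a).

Definition sphere (F : closedFieldType) (abs : F -> R) (r : R) (t : F) : F -> Prop :=
  fun x => abs (x - t) = r.

(* singular points of f or f o f:
   {±sqrt(-a), ±sqrt((-3 ± sqrt 5) a / 2)} *)
Definition singular (F : closedFieldType) (a : F) (y : F) : Prop :=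
  y ^+ 2 = - a \/
  exists s : F, s ^+ 2 = 5%:R /\ 2%:R * y ^+ 2 = (- 3%:R + s) * a.

Definition P2 (F : closedFieldType) (a : F) (x : F) : Prop :=
  exists n : nat, singular a (iter n (fa a) x).

(* Main.v *)
Require Import Defs.
From Stdlib Require Import Reals Lra.
From mathcomp Require Import all_boot all_order all_algebra.
From mathcomp Require Import ring.
Set Implicit Arguments.
Import GRing.Theory.
Local Open Scope ring_scope.

Lemma third_facts : Rlt R0 (Rinv (INR 3)) /\ Rmult (INR 3) (Rinv (INR 3)) = R1 /\ INR 3 = Rplus (Rplus R1 R1) R1.
Proof.
have e : INR 3 = Rplus (Rplus R1 R1) R1 by rewrite !S_INR INR_0 Rplus_0_l.
have n0 : INR 3 <> R0 by apply not_0_INR.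
split; last split => //; last by apply Rinv_r.
apply Rinv_0_lt_compat; rewrite e; lra.
Qed.

Lemma abs_basics (F : closedFieldType) (abs : F -> R) (hF : is_C3_like abs) :
  abs 1 = R1 /\ (forall x, abs (- x) = abs x) /\ abs (2%:R : F) = R1.
Proof.
case: hF => h0 [hz [hm [hu [h3 _]]]].
have a1 : abs 1 = R1.
  have e := hm 1 1. rewrite mulr1 in e.
  have n0 : abs 1 <> R0 by move/hz=> /eqP; rewrite oner_eq0.
  have := h0 1. nra.
have aN : forall x, abs (- x) = abs x.
  have am1 : abs (- (1:F)) = R1.
    have e := hm (- (1:F)) (- (1:F)). rewrite mulrNN mulr1 a1 in e.
    have := h0 (- (1:F)). nra.
  by move=> x; rewrite -mulN1r hm am1 Rmult_1_l.
split=> //; split=> //.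
have le2 : Rle (abs (2%:R : F)) R1.
  have e2 : (2%:R : F) = 1 + 1 by rewrite mulr2n.
  rewrite e2. have := hu 1 1. rewrite a1 Rmax_left //; apply Rle_refl.
have e : (3%:R:F) + - 2%:R = 1 by rewrite -natrB.
have H : Rle R1 (Rmax (abs (3%:R:F)) (abs (2%:R:F))).
  have := hu (3%:R:F) (- 2%:R). rewrite e a1 aN. exact.
rewrite h3 in H.
have [i3a [i3b i3c]] := third_facts. rewrite {1}i3c in i3b.
apply: Rle_antisym => //.
move: H; rewrite /Rmax; case: Rle_dec => _; lra.
Qed.

Lemma ultra_strict (F : closedFieldType) (abs : F -> R) (hF : is_C3_like abs) (x y : F) :
  Rlt (abs y) (abs x) -> abs (x + y) = abs x.
Proof.
have [aone [aN a2]] := abs_basics hF.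
case: hF => h0 [hz [hm [hu [h3 _]]]] H.
have H1 := hu (x + y) (- y). rewrite addrK aN in H1.
have H2 := hu x y.
move: H1 H2; rewrite /Rmax; do 2 case: Rle_dec => _; lra.
Qed.

Lemma abs_div (F : closedFieldType) (abs : F -> R) (hF : is_C3_like abs) (u v : F) :
  v != 0 -> abs (u / v) = Rmult (abs u) (Rinv (abs v)).
Proof.
have [aone [aN a2]] := abs_basics hF.
case: hF => h0 [hz [hm [hu [h3 _]]]] nv.
have nv' : abs v <> R0 by move/hz; apply/eqP.
rewrite hm; congr Rmult.
have e := hm (v^-1) v. rewrite mulVf // aone in e.
apply (Rmult_eq_reg_r (abs v)) => //. rewrite -e Rinv_l //.
Qed.

Lemma step (F : closedFieldType) (abs : F -> R) (hF : is_C3_like abs) (a t x : F) (r : R) :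
  a != 0 -> t ^+ 2 = - (2%:R * a) -> Rlt r (abs t) -> Rle (abs (x - t)) r ->
  Rle (abs (fa a x - - t))
      (Rmult (Rmax (Rinv (INR 3)) (Rdiv r (abs t))) (abs (x - t))).
Proof.
move=> na ht hrt hd.
have [aone [aN a2]] := abs_basics hF.
have us := ultra_strict hF.
have ad := abs_div hF.
case: hF => h0 [hz [hm [hu [h3 _]]]].
set h := x - t in hd *.
have xe : x = t + h by rewrite /h addrC subrK.
set s := abs t in hrt *. set d := abs h in hd *.
have hA : abs a = Rmult s s.
  have := congr1 abs ht. rewrite expr2 hm aN hm a2 Rmult_1_l => <- //.
have d0 : Rle R0 d by apply h0.
have s0 : Rlt R0 s by lra.
set D := - a + (h * h + 2%:R * t * h).
have De : x ^+ 2 + a = D.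
  have -> : x ^+ 2 + a = D + (t ^+ 2 + 2%:R * a) by rewrite /D xe; ring.
  by rewrite ht addNr addr0.
have aD : abs D = abs a.
  rewrite /D us aN //.
  have H : Rle (abs (h * h + 2%:R * t * h)) (Rmax (Rmult d d) (Rmult s d)).
    have := hu (h * h) (2%:R * t * h). rewrite !hm a2 Rmult_1_l. exact.
  rewrite hA. move: H.
  have : Rlt (Rmult d d) (Rmult s s) by apply Rmult_le_0_lt_compat; lra.
  have : Rlt (Rmult s d) (Rmult s s) by apply Rmult_lt_compat_l; lra.
  rewrite /Rmax; case: Rle_dec => _; lra.
have nD : D != 0.
  apply/eqP => /hz H. rewrite H in aD.
  have : abs a <> R0 by move/hz; apply/eqP.
  by rewrite -aD.
have fe : fa a x - - t = h * (t * h - 3%:R * a) / D.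
  rewrite /fa opprK -De.
  have nD' : x ^+ 2 + a != 0 by rewrite De.
  have -> : a * x / (x ^+ 2 + a) + t = (a * x + t * (x ^+ 2 + a)) / (x ^+ 2 + a)
    by field.
  congr (_ / _).
  have -> : a * x + t * (x ^+ 2 + a) = h * (t * h - 3%:R * a) + (t ^+ 2 + 2%:R * a) * (t + 2%:R * h)
    by rewrite xe; ring.
  by rewrite ht addNr mul0r addr0.
rewrite fe ad // hm aD.
set c := Rmax (Rinv (INR 3)) (Rdiv r s).
have [i3a [i3b i3c]] := third_facts.
have cge : Rle (Rinv (INR 3)) c by apply Rmax_l.
have cge2 : Rle (Rdiv r s) c by apply Rmax_r.
have N : Rle (abs (t * h - 3%:R * a)) (Rmult c (abs a)).
  have H : Rle (abs (t * h - 3%:R * a)) (Rmax (Rmult s d) (Rmult (Rinv (INR 3)) (abs a))).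
    have := hu (t * h) (- (3%:R * a)). rewrite aN !hm h3. exact.
  have B1 : Rle (Rmult s d) (Rmult c (abs a)).
    rewrite hA. apply Rle_trans with (Rmult s r). apply Rmult_le_compat_l; lra.
    have -> : Rmult s r = Rmult (Rdiv r s) (Rmult s s).
      rewrite /Rdiv Rmult_assoc -(Rmult_assoc (Rinv s)) Rinv_l; last by lra.
      by rewrite Rmult_1_l Rmult_comm.
    apply Rmult_le_compat_r => //. nra.
  have B2 : Rle (Rmult (Rinv (INR 3)) (abs a)) (Rmult c (abs a)).
    apply Rmult_le_compat_r => //. 
  move: H B1 B2; rewrite /Rmax; case: Rle_dec => _; lra.
have aa : Rlt R0 (abs a) by rewrite hA; nra.
apply Rle_trans with (Rmult (Rmult d (Rmult c (abs a))) (Rinv (abs a))).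
  apply Rmult_le_compat_r. by left; apply Rinv_0_lt_compat.
  by apply Rmult_le_compat_l.
right. rewrite !Rmult_assoc Rinv_r ?Rmult_1_r //; lra.
Qed.

Lemma pow_le1 (c : R) (n : nat) : Rle R0 c -> Rle c R1 -> Rle R0 (pow c n) /\ Rle (pow c n) R1.
Proof.
move=> h0 h1; elim: n => [|n [IH1 IH2]] /=; first lra.
split; nra.
Qed.

Lemma orbit (F : closedFieldType) (abs : F -> R) (hF : is_C3_like abs) (a t x : F) (r : R) :
  a != 0 -> t ^+ 2 = - (2%:R * a) -> Rlt r (abs t) -> Rle (abs (x - t)) r ->
  forall n,
  Rle (abs (iter (2 * n) (fa a) x - t))
      (Rmult (pow (Rmax (Rinv (INR 3)) (Rdiv r (abs t))) n) (abs (x - t))) /\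
  Rle (abs (iter (2 * n).+1 (fa a) x - - t))
      (Rmult (pow (Rmax (Rinv (INR 3)) (Rdiv r (abs t))) n) (abs (x - t))).
Proof.
move=> na ht hrt hd.
have [aone [aN a2]] := abs_basics hF.
have st := step hF.
have h0 : forall y, Rle R0 (abs y) by case: hF.
set c := Rmax (Rinv (INR 3)) (Rdiv r (abs t)).
have [i3a [i3b i3c]] := third_facts. rewrite {1}i3c in i3b.
have d0 := h0 (x - t).
have s0 : Rlt R0 (abs t) by lra.
have c0 : Rle R0 c by apply Rle_trans with (Rinv (INR 3)); [lra | apply Rmax_l].
have c1 : Rle c R1.
  rewrite /c /Rmax; case: Rle_dec => _; last lra.
  rewrite /Rdiv. apply Rle_trans with (Rmult (abs t) (Rinv (abs t))).
    apply Rmult_le_compat_r; [left; apply Rinv_0_lt_compat|]; lra.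
  rewrite Rinv_r; lra.
have ht' : (- t) ^+ 2 = - (2%:R * a) by rewrite sqrrN.
have hrt' : Rlt r (abs (- t)) by rewrite aN.
elim=> [|n [IH1 IH2]].
  rewrite /= Rmult_1_l. split; first by apply Rle_refl.
  apply Rle_trans with (Rmult c (abs (x - t))); first by apply st.
  rewrite -{2}(Rmult_1_l (abs (x - t))). by apply Rmult_le_compat_r.
have [p0 p1] := pow_le1 n c0 c1.
have [q0 q1] := pow_le1 n.+1 c0 c1.
have E : (2 * n.+1 = (2 * n).+2)%N by rewrite mulnS addSn add1n.
rewrite E.
set y := iter (2 * n).+1 (fa a) x in IH2 *.
have hy : Rle (abs (y - - t)) r.
  apply Rle_trans with (abs (x - t)) => //.
  apply Rle_trans with (Rmult (pow c n) (abs (x - t))) => //.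
  rewrite -{2}(Rmult_1_l (abs (x - t))). by apply Rmult_le_compat_r.
have S1 := st a (- t) y r na ht' hrt' hy.
rewrite opprK aN -/c in S1.
have B1 : Rle (abs (iter (2 * n).+2 (fa a) x - t)) (Rmult (pow c n.+1) (abs (x - t))).
  apply Rle_trans with (1 := S1). rewrite /= Rmult_assoc.
  by apply Rmult_le_compat_l.
split => //.
set z := iter (2 * n).+2 (fa a) x in B1 *.
have hz : Rle (abs (z - t)) r.
  apply Rle_trans with (abs (x - t)) => //.
  apply Rle_trans with (Rmult (pow c n.+1) (abs (x - t))) => //.
  rewrite -{2}(Rmult_1_l (abs (x - t))). by apply Rmult_le_compat_r.
have S2 := st a t z r na ht hrt hz.
rewrite -/c in S2.
apply Rle_trans with (1 := S2).
apply Rle_trans with (Rmult c (Rmult (pow c n.+1) (abs (x - t)))).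
  by apply Rmult_le_compat_l.
have := Rmult_le_pos _ _ q0 d0. nra.
Qed.

Lemma conv (F : closedFieldType) (abs : F -> R) (hF : is_C3_like abs) (a t x : F) (r : R) :
  a != 0 -> t ^+ 2 = - (2%:R * a) -> Rlt R0 r -> Rlt r (abs t) -> Rle (abs (x - t)) r ->
  converges_to abs (fun n => iter (2 * n) (fa a) x) t /\
  converges_to abs (fun n => iter (2 * n).+1 (fa a) x) (- t).
Proof.
move=> na ht r0 hrt hd.
have O := @orbit _ _ hF a t x r na ht hrt hd.
set c := Rmax (Rinv (INR 3)) (Rdiv r (abs t)) in O.
have h0 : forall y, Rle R0 (abs y) by case: hF.
have [i3a [i3b i3c]] := third_facts. rewrite {1}i3c in i3b.
have s0 : Rlt R0 (abs t) by lra.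
have c0 : Rle R0 c by apply Rle_trans with (Rinv (INR 3)); [lra | apply Rmax_l].
have c1 : Rlt c R1.
  rewrite /c /Rmax; case: Rle_dec => _; last lra.
  rewrite /Rdiv. apply Rlt_le_trans with (Rmult (abs t) (Rinv (abs t))).
    apply Rmult_lt_compat_r; [apply Rinv_0_lt_compat|]; lra.
  rewrite Rinv_r; lra.
have key : forall eps, Rlt R0 eps -> exists N : nat, forall n : nat, (N <= n)%N ->
    Rlt (Rmult (pow c n) (abs (x - t))) eps.
  move=> eps he.
  have Hc : Rlt (Rabs c) R1 by rewrite Rabs_pos_eq.
  have HP : Rlt R0 (Rmult eps (Rinv r)).
    apply Rmult_lt_0_compat => //; by apply Rinv_0_lt_compat.
  have [N HN] := pow_lt_1_zero c Hc _ HP.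
  exists N => n /leP hn.
  have := HN n hn. rewrite Rabs_pos_eq; last by apply pow_le.
  move=> H.
  apply Rle_lt_trans with (Rmult (pow c n) r).
    apply Rmult_le_compat_l => //; by apply pow_le.
  have := Rmult_lt_compat_r r _ _ r0 H.
  by rewrite Rmult_assoc Rinv_l ?Rmult_1_r //; lra.
split=> eps he; have [N HN] := key eps he; exists N => n hn;
  have [O1 O2] := O n; have := HN n hn.
- by move=> H; apply Rle_lt_trans with (1 := O1).
- by move=> H; apply Rle_lt_trans with (1 := O2).
Qed.

Theorem theorem4p3 (F : closedFieldType) (abs : F -> R)
    (hF : is_C3_like abs) (a : F) (ha : a != 0)
    (t1 t2 : F) (ht1 : t1 ^+ 2 = - (2%:R * a)) (ht2 : t2 = - t1)
    (r : R) (hr0 : Rlt R0 r) (hr : Rlt r (sqrt (abs a))) :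
  (forall x : F, sphere abs r t1 x -> ~ P2 a x ->
     converges_to abs (fun n => iter (2 * n) (fa a) x) t1 /\
     converges_to abs (fun n => iter (2 * n).+1 (fa a) x) t2) /\
  (forall x : F, sphere abs r t2 x -> ~ P2 a x ->
     converges_to abs (fun n => iter (2 * n) (fa a) x) t2 /\
     converges_to abs (fun n => iter (2 * n).+1 (fa a) x) t1).
Proof.
have [aone [aN a2]] := abs_basics hF.
have h0 : forall y, Rle R0 (abs y) by case: hF.
have hm : forall x y : F, abs (x * y) = Rmult (abs x) (abs y) by case: hF => _ [_ [hm _]].
have hA : abs a = Rmult (abs t1) (abs t1).
  have := congr1 abs ht1. rewrite expr2 hm aN hm a2 Rmult_1_l => <- //.
have hs : sqrt (abs a) = abs t1 by rewrite hA sqrt_square.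
rewrite hs in hr.
have ht2' : t2 ^+ 2 = - (2%:R * a) by rewrite ht2 sqrrN.
have hr2 : Rlt r (abs t2) by rewrite ht2 aN.
split=> x hx _.
- have := @conv _ _ hF a t1 x r ha ht1 hr0 hr (Req_le _ _ hx). by rewrite -ht2.
- have := @conv _ _ hF a t2 x r ha ht2' hr0 hr2 (Req_le _ _ hx). by rewrite ht2 opprK.
Qed.
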